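(* Let $X$ be a topological space and let $\mathcal P$ be a ring of open subsets of $X$ (closed under finite unions and finite intersections) which is closed under a winning strategy for Player I in the open-open game on $X$ and satisfies $\mathcal P\subseteq\mathcal P_{seq}$. Then $X/\mathcal P$ with the $\mathcal Q_{\mathcal P}$-topology is a completely regular space and the $\mathcal Q_{\mathcal P}$-map $q:X\to X/\mathcal P$ is skeletal.
   Context: For a family $\mathcal P$ of subsets of $X$: $[x]_{\mathcal P}=\{y: \forall V\in\mathcal P\ (x\in V\iff y\in V)\}$, $X/\mathcal P=\{[x]_{\mathcal P}:x\in X\}$, $q(x)=[x]_{\mathcal P}$ is the $\mathcal Q_{\mathcal P}$-map, and the $\mathcal Q_{\mathcal P}$-topology is the coarsest topology on $X/\mathcal P$ containing all $q[V]$, $V\in\mathcal P$. $\mathcal P_{seq}$ is the family of all sets $W$ for which there exist $\{U_n\}_{n\in\omega},\{V_n\}_{n\in\omega}\subseteq\mathcal P$ with $U_k\subseteq X\setminus V_k\subseteq U_{k+1}$ for all $k$ and $\bigcup_nU_n=W$. Open-open game: at inning $n$ Player I picks a non-empty open $A_n$, Player II a non-empty open $B_n\subseteq A_n$; Player I wins if $\bigcup_nB_n$ is dense. A strategy $\sigma$ for Player I assigns a non-empty open set to each finite sequence of non-empty open sets; it is winning if Player I wins every play with $A_0=\sigma(\emptyset)$, $A_{n+1}=\sigma(B_0,\dots,B_n)$. $\mathcal P$ is closed under $\sigma$ if $\sigma(\emptyset)\in\mathcal P$ and $\sigma(B_0,\dots,B_n)\in\mathcal P$ whenever $B_0,\dots,B_n$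 are non-empty members of $\mathcal P$. A continuous surjection $f$ is skeletal if for every non-empty open $U$ the closure of $f[U]$ has non-empty interior. *)

(* Defs.v *)
From HB Require Import structures.
From mathcomp Require Import all_boot all_order all_algebra.
From mathcomp Require Import all_classical all_reals topology.
From mathcomp Require Import Rstruct Rstruct_topology.
From Stdlib Require Import Reals.

Set Implicit Arguments.
Unset Strict Implicit.
Unset Printing Implicit Defensive.

Local Open Scope classical_set_scope.

Section Defs.
Context {X : topologicalType}.

Definition cls (P : set (set X)) (x : X) : set X :=
  [set y | forall V, P V -> (V x <-> V y)].

Definition quot (P : set (set X)) : Type := {A : set X | exists x, A = cls P x}.

Definition qmap (P : set (set X)) (x : X) : quot P :=
  exist _ (cls P x) (ex_intro _ x erefl).

Definition is_topology {Y : Type} (O : set (set Y)) : Prop :=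
  O setT /\ (forall A B, O A -> O B -> O (A `&` B)) /\
  (forall F : set (set Y), F `<=` O -> O (\bigcup_(A in F) A)).

Definition gen_topology {Y : Type} (S : set (set Y)) : set (set Y) :=
  fun A => forall O, is_topology O -> S `<=` O -> O A.

Definition QP_topology (P : set (set X)) : set (set (quot P)) :=
  gen_topology [set qmap P @` V | V in P].

Definition completely_regular {Y : Type} (O : set (set Y)) : Prop :=
  forall (F : set Y) (p : Y), O (~` F) -> ~ F p ->
    exists f : Y -> R,
      (forall A : set R, open A -> O (f @^-1` A)) /\
      (forall y, (0 <= f y <= 1)%R) /\ f p = 0%R /\
      (forall y, F y -> f y = 1%R).

Definition closure_in {Y : Type} (O : set (set Y)) (A : set Y) : set Y :=
  [set y | forall W, O W -> W y -> W `&` A !=set0].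

Definition interior_in {Y : Type} (O : set (set Y)) (A : set Y) : set Y :=
  \bigcup_(W in [set W | O W /\ W `<=` A]) W.

Definition skeletal {Y : Type} (O : set (set Y)) (f : X -> Y) : Prop :=
  (forall W, O W -> open (f @^-1` W)) /\
  (forall y, exists x, f x = y) /\
  (forall U : set X, open U -> U !=set0 ->
     interior_in O (closure_in O (f @` U)) !=set0).

Definition ring_of_open_sets (P : set (set X)) : Prop :=
  (forall V, P V -> open V) /\
  (forall U V, P U -> P V -> P (U `|` V)) /\
  (forall U V, P U -> P V -> P (U `&` V)).

Definition Pseq (P : set (set X)) : set (set X) :=
  [set W | exists U V : nat -> set X,
     (forall n, P (U n)) /\ (forall n, P (V n)) /\
     (forall k, U k `<=` ~` V k /\ ~` V k `<=` U k.+1) /\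
     \bigcup_n U n = W].

Definition nonempty_open (A : set X) : Prop := open A /\ A !=set0.

Definition strategyI (sigma : seq (set X) -> set X) : Prop :=
  forall s : seq (set X), (forall B, B \in s -> nonempty_open B) ->
    nonempty_open (sigma s).

Definition play_by (sigma : seq (set X) -> set X)
  (A B : nat -> set X) : Prop :=
  A 0 = sigma [::] /\
  (forall n, A n.+1 = sigma [seq B i | i <- iota 0 n.+1]) /\
  (forall n, nonempty_open (B n) /\ B n `<=` A n).

Definition winning_strategyI (sigma : seq (set X) -> set X) : Prop :=
  strategyI sigma /\
  forall A B, play_by sigma A B -> dense (\bigcup_n B n).

Definition closed_under (P : set (set X)) (sigma : seq (set X) -> set X) : Prop :=
  P (sigma [::]) /\
  forall s : seq (set X), s != [::] ->
    (forall B, B \in s -> P B /\ B !=set0) -> P (sigma s).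

End Defs.
Arguments qmap {X} P x.
Arguments cls {X} P x.
Arguments quot {X} P.
Arguments QP_topology {X} P.
Arguments Pseq {X} P.
Arguments ring_of_open_sets {X} P.
Arguments closed_under {X} P sigma.

(* Main.v *)
Require Import Defs.
From mathcomp Require Import all_boot all_order all_algebra.
From mathcomp Require Import all_classical all_reals topology normedtype.
From mathcomp Require Import Rstruct Rstruct_topology.
From mathcomp Require Import zify.
From Stdlib Require Import Reals Lra Lia Cantor Classical_Prop.
Set Implicit Arguments.
Unset Strict Implicit.
Local Open Scope classical_set_scope.

Lemma R_open_ball (A : set R) (y : R) : open A -> A y ->
  exists e : R, Rlt 0 e /\ forall z, Rlt (Rabs (z - y)) e -> A z.
Proof.
move=> oA Ay.
have : nbhs y A by apply: open_nbhs_nbhs; split.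
move=> /nbhs_ballP [e e0 He].
exists e; split; first by apply/RltP.
move=> z hz; apply: He.
rewrite /ball /= -RabsE.
apply/RltP. by rewrite Rabs_minus_sym.
Qed.

Section Lat.
Variables (Y : Type) (Bs : set (set Y)).
Hypothesis HI : forall a b, Bs a -> Bs b -> Bs (a `&` b).
Hypothesis HU : forall a b, Bs a -> Bs b -> Bs (a `|` b).
Hypothesis HM : forall b, Bs b -> exists u v : nat -> set Y,
  (forall n, Bs (u n)) /\ (forall n, Bs (v n)) /\ b = \bigcup_n u n /\
  (forall n, u n `&` v n = set0) /\ (forall n, v n `|` b = setT).

Definition Lc (B : set Y) := exists s : nat -> set Y, (forall n, Bs (s n)) /\ B = \bigcup_n s n.

Lemma margin_rep B : Lc B -> exists a y : nat -> set Y,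
  (forall n, Bs (a n)) /\ (forall n, Bs (y n)) /\ B = \bigcup_n a n /\
  (forall n, a n `&` y n = set0) /\ (forall n, y n `|` B = setT).
Proof.
case=> s [Bss ->].
have : forall n, exists uv : (nat -> set Y) * (nat -> set Y),
  (forall m, Bs (uv.1 m)) /\ (forall m, Bs (uv.2 m)) /\ s n = \bigcup_m uv.1 m /\
  (forall m, uv.1 m `&` uv.2 m = set0) /\ (forall m, uv.2 m `|` s n = setT).
  move=> n; have [u [v H]] := HM (Bss n); by exists (u, v).
move=> /choice [uv Huv].
pose a k := let p := Cantor.of_nat k in (uv p.1).1 p.2.
pose y k := let p := Cantor.of_nat k in (uv p.1).2 p.2.
exists a, y; split; [|split; [|split; [|split]]].
- by move=> k; rewrite /a; case: (Huv (Cantor.of_nat k).1).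
- by move=> k; rewrite /y; case: (Huv (Cantor.of_nat k).1) => _ [].
- apply/seteqP; split => x /=.
    case=> n _; case: (Huv n) => _ [_ [-> _]] [m _ hm].
    exists (Cantor.to_nat (n, m)) => //.
    by rewrite /a Cantor.cancel_of_to.
  case=> k _; rewrite /a => hk; exists (Cantor.of_nat k).1 => //.
  by case: (Huv (Cantor.of_nat k).1) => _ [_ [-> _]]; exists (Cantor.of_nat k).2.
- by move=> k; rewrite /a /y; case: (Huv (Cantor.of_nat k).1) => _ [_ [_ []]].
- move=> k; rewrite /y; case: (Huv (Cantor.of_nat k).1) => _ [_ [_ [_ H]]].
  apply/seteqP; split => // x _.
  have := H (Cantor.of_nat k).2; move/seteqP => [_ /(_ x I)] [hx|hx]; first by left.
  by right; exists (Cantor.of_nat k).1.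
Qed.

Fixpoint cupn (a : nat -> set Y) m := match m with 0 => a 0 | m'.+1 => cupn a m' `|` a m'.+1 end.
Fixpoint capn (a : nat -> set Y) m := match m with 0 => a 0 | m'.+1 => capn a m' `&` a m'.+1 end.

Lemma cupnP a m x : cupn a m x <-> exists2 i, (i <= m)%N & a i x.
Proof.
elim: m => [|m IH] /=.
  by split; [move=> h; exists 0%N|case=> -[]].
split.
  case=> [/IH [i hi hx]|hx]; [exists i => //; exact: leqW| by exists m.+1].
case=> i; rewrite leq_eqVlt => /orP [/eqP ->|him] hx; first by right.
by left; apply/IH; exists i.
Qed.

Lemma capnP a m x : capn a m x <-> forall i, (i <= m)%N -> a i x.
Proof.
elim: m => [|m IH] /=.
  by split; [move=> h [|i] //|apply].
split.
  case=> /IH h hx i; rewrite leq_eqVlt => /orP [/eqP ->|him] //; exact: h.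
by move=> h; split; [apply/IH => i hi; apply: h; exact: leqW|apply: h].
Qed.

Lemma cupnB a m : (forall n, Bs (a n)) -> Bs (cupn a m).
Proof. by move=> h; elim: m => //= m IH; apply: HU. Qed.
Lemma capnB a m : (forall n, Bs (a n)) -> Bs (capn a m).
Proof. by move=> h; elim: m => //= m IH; apply: HI. Qed.

Lemma Lc_interp B C : Lc B -> Lc C -> B `|` C = setT ->
  exists D E, Lc D /\ Lc E /\ D `&` E = set0 /\ D `|` C = setT /\ E `|` B = setT.
Proof.
move=> /margin_rep [a [y [Ba [By [eB [ay yB]]]]]].
move=> /margin_rep [c [z [Bc [Bz [eC [cz zC]]]]]] BC.
pose D m := cupn a m `&` capn z m.
pose E m := cupn c m `&` capn y m.
have key : forall (a y c z : nat -> set Y) B C, B = \bigcup_n a n ->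
    (forall n, a n `&` y n = set0) -> (forall n, z n `|` C = setT) ->
    B `|` C = setT -> forall x, ~ C x -> exists m, cupn a m x /\ capn z m x.
  move=> a' y' c' z' B' C' eB' ay' zC' BC' x nCx.
  have : B' x by move/seteqP: BC' => [_ /(_ x I)] [] //.
  rewrite eB' => -[m _ hm]; exists m; split; first by apply/cupnP; exists m.
  apply/capnP => i _; move/seteqP: (zC' i) => [_ /(_ x I)] [] //.
have disj : forall (a y c z : nat -> set Y) m k, (m <= k)%N ->
    (forall n, a n `&` y n = set0) -> cupn a m `&` capn y k = set0.
  move=> a' y' _ _ m k mk ay'; apply/seteqP; split => // x [/cupnP [i im ha] /capnP hy].
  have := ay' i; move/seteqP => [+ _] => /(_ x) /=; apply; split => //.
  apply: hy; exact: leq_trans mk.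
exists (\bigcup_m D m), (\bigcup_m E m); split; [|split; [|split; [|split]]].
- exists D; split => // m; apply: HI; [exact: cupnB|exact: capnB].
- exists E; split => // m; apply: HI; [exact: cupnB|exact: capnB].
- apply/seteqP; split => // x [[m _ [hxa hxz]] [k _ [hxc hxy]]].
  case: (leqP m k) => mk.
    by have := disj a y c z m k mk ay; move/seteqP => [+ _] => /(_ x (conj hxa hxy)).
  have := disj c z a y k m (ltnW mk) cz; move/seteqP => [+ _] => /(_ x (conj hxc hxz)).
  by [].
- apply/seteqP; split => // x _; have [Cx|nCx] := pselect (C x); first by right.
  have [m hm] := key a y c z B C eB ay zC BC x nCx; by left; exists m.
- apply/seteqP; split => // x _; have [Bx|nBx] := pselect (B x); first by right.
  rewrite setUC in BC.
  have [m hm] := key c z a y C B eC cz yB BC x nBx; by left; exists m.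
Qed.

Variables B0 C0 : set Y.
Hypotheses (LB0 : Lc B0) (LC0 : Lc C0) (BC0 : B0 `|` C0 = setT).

Definition pair := (set Y * set Y)%type.

Lemma g_ex : forall pq : pair * pair, exists r : pair,
  Lc pq.1.2 -> Lc pq.2.1 -> pq.1.2 `|` pq.2.1 = setT ->
  Lc r.1 /\ Lc r.2 /\ r.1 `&` r.2 = set0 /\ pq.1.2 `|` r.1 = setT /\ r.2 `|` pq.2.1 = setT.
Proof.
move=> [[p1 p2] [q1 q2]] /=.
have [Lp|nLp] := pselect (Lc p2); last by exists (set0, set0).
have [Lq|nLq] := pselect (Lc q1); last by exists (set0, set0).
have [U|nU] := pselect (p2 `|` q1 = setT); last by exists (set0, set0).
rewrite setUC in U.
have [D [E [LD [LE [DE [DC EB]]]]]] := Lc_interp Lq Lp U.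
by exists (D, E) => _ _ _; rewrite setUC.
Qed.

Definition g : pair * pair -> pair := projT1 (choice g_ex).
Lemma gP p q : Lc p.2 -> Lc q.1 -> p.2 `|` q.1 = setT ->
  Lc (g (p, q)).1 /\ Lc (g (p, q)).2 /\ (g (p, q)).1 `&` (g (p, q)).2 = set0 /\
  p.2 `|` (g (p, q)).1 = setT /\ (g (p, q)).2 `|` q.1 = setT.
Proof. exact: (projT2 (choice g_ex) (p, q)). Qed.

Definition top : pair := (B0, set0).
Definition p0 : pair := g ((set0, C0), top).

Fixpoint ch (n : nat) : nat -> pair :=
  match n with
  | 0 => fun k => if k == 0 then p0 else top
  | n'.+1 => fun k => if odd k then g (ch n' k./2, ch n' k./2.+1) else ch n' k./2
  end.

Lemma ch_even n i : ch n.+1 i.*2 = ch n i.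
Proof. by rewrite /= odd_double half_double. Qed.
Lemma ch_odd n i : ch n.+1 i.*2.+1 = g (ch n i, ch n i.+1).
Proof. by rewrite /= odd_double /= uphalf_double. Qed.

Lemma kcases k : exists i, k = i.*2 \/ k = i.*2.+1.
Proof.
have e := odd_double_half k; exists k./2.
by case: (odd k) e => /= e; [right|left]; rewrite -{1}e.
Qed.

Definition inv n := ch n (expn 2 n) = top /\
  forall k, (k < expn 2 n)%N -> Lc (ch n k).1 /\ Lc (ch n k).2 /\
     (ch n k).1 `&` (ch n k).2 = set0 /\ (ch n k).2 `|` (ch n k.+1).1 = setT.

Lemma p0P : Lc p0.1 /\ Lc p0.2 /\ p0.1 `&` p0.2 = set0 /\ C0 `|` p0.1 = setT /\ p0.2 `|` B0 = setT.
Proof. by apply: gP => //=; rewrite setUC. Qed.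

Lemma invP n : inv n.
Proof.
elim: n => [|n [Htop IH]].
  split => // k; rewrite expn0 ltnS leqn0 => /eqP -> /=.
  by have [? [? [? [_ ?]]]] := p0P.
split.
  by rewrite expnS mul2n ch_even.
move=> k; have [i [->|->]] := kcases k.
  rewrite expnS mul2n ltn_double => hi.
  rewrite ch_even ch_odd.
  have [L1 [L2 [D12 U12]]] := IH i hi.
  have Lq : Lc (ch n i.+1).1.
    case: (ltnP i.+1 (expn 2 n)) => h; first by case: (IH _ h).
    have -> : i.+1 = expn 2 n by apply/eqP; rewrite eqn_leq h hi.
    by rewrite Htop.
  by have [? [? [? [? ?]]]] := gP L2 Lq U12.
rewrite expnS mul2n ltn_Sdouble => hi.
rewrite ch_odd -doubleS ch_even.
have [L1 [L2 [D12 U12]]] := IH i hi.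
have Lq : Lc (ch n i.+1).1.
  case: (ltnP i.+1 (expn 2 n)) => h; first by case: (IH _ h).
  have -> : i.+1 = expn 2 n by apply/eqP; rewrite eqn_leq h hi.
  by rewrite Htop.
by have [? [? [? [? ?]]]] := gP L2 Lq U12.
Qed.

Definition Oc n k := (ch n k).1.
Definition Ec n k := (ch n k).2.

Lemma Ostep n j : (j < expn 2 n)%N -> Oc n j `<=` Oc n j.+1.
Proof.
move=> hj x hx; have [_ [_ [D U]]] := (invP n).2 j hj.
move/seteqP: U => [_ /(_ x I)] [] // hE.
by move/seteqP: D => [/(_ x (conj hx hE))].
Qed.

Lemma Om n j j' : (j <= j')%N -> (j' <= expn 2 n)%N -> Oc n j `<=` Oc n j'.
Proof.
elim: j' => [|j' IH] hj hj'.
  by move: hj; rewrite leqn0 => /eqP ->.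
move: hj; rewrite leq_eqVlt => /orP [/eqP -> //|]; rewrite ltnS => hj.
apply: subset_trans (IH hj (ltnW hj')) _; exact: Ostep.
Qed.

Lemma OE n k : (k < expn 2 n)%N -> Oc n k `&` Ec n k = set0.
Proof. by move=> hk; have [_ [_ [D _]]] := (invP n).2 k hk. Qed.
Lemma EO n k : (k < expn 2 n)%N -> Ec n k `|` Oc n k.+1 = setT.
Proof. by move=> hk; have [_ [_ [_ U]]] := (invP n).2 k hk. Qed.
Lemma LO n k : (k <= expn 2 n)%N -> Lc (Oc n k).
Proof.
rewrite leq_eqVlt => /orP [/eqP ->|hk]; first by rewrite /Oc (invP n).1.
by have [] := (invP n).2 k hk.
Qed.
Lemma LE n k : (k < expn 2 n)%N -> Lc (Ec n k).
Proof. by move=> hk; have [_ []] := (invP n).2 k hk. Qed.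
Lemma Otop n : Oc n (expn 2 n) = B0.
Proof. by rewrite /Oc (invP n).1. Qed.
Lemma O0 n : Oc n 0 = p0.1.
Proof. by elim: n => // n IH; rewrite /Oc -(double0) ch_even. Qed.

Definition pr n y k : bool := (expn 2 n <= k)%N || `[< Oc n k y >].
Lemma idx_ex n y : exists k, pr n y k.
Proof. by exists (expn 2 n); rewrite /pr leqnn. Qed.
Definition idx n y := ex_minn (idx_ex n y).

Lemma idx_le n y : (idx n y <= expn 2 n)%N.
Proof. by rewrite /idx; case: ex_minnP => m _; apply; rewrite /pr leqnn. Qed.
Lemma idx_in n y : (idx n y < expn 2 n)%N -> Oc n (idx n y) y.
Proof.
rewrite /idx; case: ex_minnP => m; rewrite /pr => /orP [h1|/asboolP //] _ h2.
by move: (leq_ltn_trans h1 h2); rewrite ltnn.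
Qed.
Lemma idx_min n y j : (j < idx n y)%N -> ~ Oc n j y.
Proof.
rewrite /idx; case: ex_minnP => m _ hm hj hO.
have : (m <= j)%N by apply: hm; rewrite /pr; apply/orP; right; apply/asboolP.
by rewrite leqNgt hj.
Qed.
Lemma idx_leP n y k : (k <= expn 2 n)%N -> (k = expn 2 n \/ Oc n k y) -> (idx n y <= k)%N.
Proof.
move=> hk h; rewrite /idx; case: ex_minnP => m _; apply; rewrite /pr.
by case: h => [->|h]; [rewrite leqnn|apply/orP; right; apply/asboolP].
Qed.
Lemma idx_geP n y k : (k <= expn 2 n)%N -> (forall j, (j < k)%N -> ~ Oc n j y) -> (k <= idx n y)%N.
Proof.
move=> hk h; rewrite leqNgt; apply/negP => hlt.
apply: (h _ hlt); apply: idx_in; exact: leq_trans hlt hk.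
Qed.

Lemma idx_up n y : (idx n.+1 y <= (idx n y).*2)%N.
Proof.
have hk := idx_le n y.
apply: idx_leP; first by rewrite expnS mul2n leq_double.
case: (ltnP (idx n y) (expn 2 n)) => h.
  by right; rewrite /Oc ch_even; exact: idx_in.
by left; rewrite expnS mul2n; congr (_.*2); apply/eqP; rewrite eqn_leq hk h.
Qed.

Lemma idx_down n y : ((idx n y).*2 <= (idx n.+1 y).+1)%N.
Proof.
have hk := idx_le n y.
case E: (idx n y) hk => [|k'] hk //.
rewrite doubleS ltnS.
apply: idx_geP.
  by rewrite expnS mul2n; apply: leq_trans (leqnSn _) _; rewrite -doubleS leq_double.
move=> j; have [i [->|->]] := kcases j.
  rewrite ltnS leq_double => hi; rewrite /Oc ch_even; apply: idx_min; rewrite E; exact: hi.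
rewrite ltnS ltn_double => hi.
move=> hO; apply: (@idx_min n y i.+1); first by rewrite E ltnS.
rewrite /Oc -(ch_even n i.+1); rewrite doubleS; apply: (Ostep _ hO).
rewrite expnS mul2n ltn_Sdouble; apply: leq_trans hk; exact: ltnW.
Qed.

Lemma INR_exp2 n : INR (expn 2 n) = (2 ^ n)%R.
Proof.
elim: n => // n IH; rewrite expnS mulnE mult_INR IH /=; reflexivity.
Qed.
Lemma INR_double k : INR k.*2 = (2 * INR k)%R.
Proof. rewrite -addnn; change (INR (Nat.add k k) = (2 * INR k)%R); rewrite plus_INR /=; lra. Qed.
Lemma INR_leq a b : (a <= b)%N -> (INR a <= INR b)%R.
Proof. by move=> h; apply: le_INR; apply/leP. Qed.

Definition fn n y := (INR (idx n y) * / 2 ^ n)%R.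
Lemma pos2 n : (0 < / 2 ^ n)%R.
Proof. apply: Rinv_0_lt_compat; apply: pow_lt; lra. Qed.
Lemma inv2S n : (/ 2 ^ n.+1 = / 2 ^ n / 2)%R.
Proof. rewrite /= Rinv_mult /Rdiv Rmult_comm //. Qed.

Lemma fn_bounds n y : (0 <= fn n y <= 1)%R.
Proof.
rewrite /fn; have h := pos2 n; have h0 := pos_INR (idx n y).
have h1 : (INR (idx n y) <= 2 ^ n)%R by rewrite -INR_exp2; apply: INR_leq; exact: idx_le.
split; first by nra.
have : (2 ^ n * / 2 ^ n = 1)%R by apply: Rinv_r; apply: pow_nonzero; lra.
nra.
Qed.

Lemma fn_step n y : (fn n.+1 y <= fn n y /\ fn n y <= fn n.+1 y + / 2 ^ n.+1)%R.
Proof.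
rewrite /fn inv2S; have h := pos2 n.
have h1 := INR_leq (idx_up n y); have h2 := INR_leq (idx_down n y).
rewrite INR_double in h1 h2; rewrite S_INR in h2.
split; nra.
Qed.

Lemma fn_far n d y : (fn (n + d) y <= fn n y /\ fn n y <= fn (n + d) y + / 2 ^ n - / 2 ^ (n + d))%R.
Proof.
elim: d => [|d [IH1 IH2]]; first by rewrite addn0; lra.
have [h1 h2] := fn_step (n + d) y; rewrite addnS; rewrite inv2S in h2 *.
split; lra.
Qed.

Definition f y : R := inf (range (fun n => fn n y)).

Lemma f_le n y : (f y <= fn n y)%R.
Proof.
apply/RleP; apply: ge_inf; last by exists n.
by exists 0%R => _ [m _ <-]; apply/RleP; case: (fn_bounds m y).
Qed.

Lemma f_ge n y : (fn n y - / 2 ^ n <= f y)%R.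
Proof.
apply/RleP; apply: lb_le_inf; first by exists (fn 0 y), 0%N.
move=> _ [m _ <-]; apply/RleP.
have h := pos2 n.
case: (leqP n m) => hm.
  rewrite -(subnKC hm); have [_ h2] := fn_far n (m - n) y; have := pos2 (n + (m - n)); lra.
have [h1 _] := fn_far m (n - m) y; rewrite subnKC in h1; [lra|exact: ltnW].
Qed.

Lemma f_lb c y : (forall n, c <= fn n y)%R -> (c <= f y)%R.
Proof.
move=> h; apply/RleP; apply: lb_le_inf; first by exists (fn 0 y), 0%N.
by move=> _ [m _ <-]; apply/RleP.
Qed.

Lemma gen_top : is_topology (gen_topology Bs).
Proof.
split; [|split].
- by move=> O [].
- by move=> A B hA hB O hO hS; case: (hO) => _ [+ _]; apply; [apply: hA|apply: hB].
- by move=> F hF O hO hS; case: (hO) => _ [_]; apply => A /hF; apply.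
Qed.

Lemma gen_sub b : Bs b -> gen_topology Bs b.
Proof. by move=> hb O _; apply. Qed.

Lemma Lc_open S : Lc S -> gen_topology Bs S.
Proof.
case=> s [hs ->].
have -> : \bigcup_n s n = \bigcup_(A in range s) A.
  apply/seteqP; split => x.
    by case=> n _ h; exists (s n) => //; exists n.
  by case=> _ [n _ <-] h; exists n.
case: gen_top => _ [_]; apply => _ [n _ <-]; exact: gen_sub.
Qed.

Lemma gen_setT : gen_topology Bs setT.
Proof. by case: gen_top. Qed.
Lemma gen_setI A B : gen_topology Bs A -> gen_topology Bs B -> gen_topology Bs (A `&` B).
Proof. by case: gen_top => _ [+ _]; apply. Qed.

Lemma loc y e : (0 < e)%R -> exists S, gen_topology Bs S /\ S y /\
  forall z, S z -> (Rabs (f z - f y) < e)%R.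
Proof.
move=> he.
have [N HN] : exists N, (/ 2 ^ N < e / 3)%R.
  have [N HN] := @pow_lt_1_zero (/ 2)%R ltac:(rewrite Rabs_pos_eq; lra) (e / 3)%R ltac:(lra).
  exists N; have := HN N (Nat.le_refl _); rewrite Rabs_pos_eq; last first.
    by apply: pow_le; lra.
  by rewrite pow_inv.
set n := N; set k := idx n y.
have hk : (k <= expn 2 n)%N := idx_le n y.
pose S1 := if (k < expn 2 n)%N then Oc n k else setT.
pose S2 := if (1 < k)%N then Ec n (k - 2) else setT.
exists (S1 `&` S2); split; [|split].
- apply: gen_setI.
    rewrite /S1; case: ifP => h; [apply: Lc_open; exact: LO|exact: gen_setT].
  rewrite /S2; case: ifP => h; last exact: gen_setT.
  apply: Lc_open; apply: LE; lia.
- split.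
    by rewrite /S1; case: ifP => h //; exact: idx_in.
  rewrite /S2; case: ifP => h //.
  have h2 : (k - 2 < expn 2 n)%N by lia.
  have := EO h2; move/seteqP => [_ /(_ y I)] [] // hO.
  exfalso; apply: (@idx_min n y (k - 2).+1) hO.
  rewrite -/k; lia.
move=> z [S1z S2z].
have up : (idx n z <= k)%N.
  apply: idx_leP => //; move: S1z; rewrite /S1; case: ifP => h S1z; first by right.
  by left; apply/eqP; rewrite eqn_leq hk leqNgt h.
have down : (k <= (idx n z).+1)%N.
  case: (ltnP 1 k) => h; last by apply: leq_trans h _.
  suff : (k - 1 <= idx n z)%N by lia.
  apply: idx_geP; first by lia.
  move=> j hj hO.
  have h2 : (k - 2 < expn 2 n)%N by lia.
  have hO' := @Om n j (k - 2) ltac:(lia) (ltnW h2) _ hO.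
  move: S2z; rewrite /S2 h => S2z.
  by have := OE h2; move/seteqP => [/(_ z (conj hO' S2z))].
have hu := pos2 n.
have R1 := INR_leq up; have R2 := INR_leq down; rewrite S_INR in R2.
have fz1 := f_le n z; have fz2 := f_ge n z; have fy1 := f_le n y; have fy2 := f_ge n y.
rewrite /fn -/k in fz1 fz2 fy1 fy2.
have P1 : (INR (idx n z) * / 2 ^ n <= INR k * / 2 ^ n)%R by apply: Rmult_le_compat_r; lra.
have P2 : (INR k * / 2 ^ n <= INR (idx n z) * / 2 ^ n + / 2 ^ n)%R by nra.
rewrite /n in P1 P2 fz1 fz2 fy1 fy2 hu.
apply: Rabs_def1; lra.
Qed.

Lemma urysohn : exists h : Y -> R, (forall A, open A -> gen_topology Bs (h @^-1` A)) /\
  (forall y, (0 <= h y <= 1)%R) /\ (forall y, ~ C0 y -> h y = 0%R) /\ (forall y, ~ B0 y -> h y = 1%R).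
Proof.
exists f; split; [|split; [|split]].
- move=> A oA.
  have -> : f @^-1` A = \bigcup_(S in [set S | gen_topology Bs S /\ S `<=` f @^-1` A]) S.
    apply/seteqP; split => y; last by case=> S [_ hS] /hS.
    move=> /= hy; have [e [he He]] := R_open_ball oA hy.
    have [S [oS [Sy HS]]] := loc y he.
    exists S => //; split => // z /HS hz; apply: He; exact: hz.
  by case: gen_top => _ [_]; apply => S [].
- move=> y; split.
    by apply: f_lb => n; case: (fn_bounds n y).
  by apply: Rle_trans (f_le 0 y) _; case: (fn_bounds 0 y).
- move=> y nC.
  have hp : p0.1 y by have [_ [_ [_ [U _]]]] := p0P; move/seteqP: U => [_ /(_ y I)] [].
  have i0 : forall n, idx n y = 0%N.
    move=> n; apply/eqP; rewrite -leqn0; apply: idx_leP => //; right; by rewrite O0.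
  apply: Rle_antisym.
    by apply: Rle_trans (f_le 0 y) _; rewrite /fn i0 /=; lra.
  by apply: f_lb => n; rewrite /fn i0 /=; lra.
- move=> y nB.
  have iT : forall n, idx n y = expn 2 n.
    move=> n; apply/eqP; rewrite eqn_leq idx_le /=; apply: idx_geP => // j hj hO.
    by apply: nB; rewrite -(Otop n); apply: (@Om n j (expn 2 n)) => //; exact: ltnW.
  have fn1 : forall n, fn n y = 1%R.
    move=> n; rewrite /fn iT INR_exp2; apply: Rinv_r; apply: pow_nonzero; lra.
  apply: Rle_antisym; first by rewrite -(fn1 0%N); exact: f_le.
  by apply: f_lb => n; rewrite fn1; lra.
Qed.
End Lat.

Lemma gen_basic (Y : Type) (Bs : set (set Y))
  (HI : forall a b, Bs a -> Bs b -> Bs (a `&` b)) W :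
  gen_topology Bs W -> W = setT \/ forall z, W z -> exists b, Bs b /\ b z /\ b `<=` W.
Proof.
move=> hW; apply: (hW (fun W => W = setT \/ forall z, W z -> exists b, Bs b /\ b z /\ b `<=` W)).
- split; [by left|split].
  + move=> A B [->|hA]; first by rewrite setTI.
    move=> [->|hB]; first by rewrite setIT; right.
    right => z [Az Bz]; have [a [Ba [az aA]]] := hA z Az; have [b [Bb [bz bB]]] := hB z Bz.
    exists (a `&` b); split; [exact: HI|split => //].
    by move=> x [ax bx]; split; [apply: aA|apply: bB].
  + move=> F hF.
    have [[A FA AT]|nT] := pselect (exists2 A, F A & A = setT).
      left; apply/seteqP; split => // x _; exists A => //; by rewrite AT.
    right => z [A FA Az]; case: (hF A FA) => [AT|hA]; first by exfalso; apply: nT; exists A.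
    have [b [Bb [bz bA]]] := hA z Az; exists b; split => //; split => // x bx; exists A => //.
    exact: bA.
- by move=> b Bb; right => z bz; exists b; split => //; split.
Qed.

Lemma cr_abstract (Y : Type) (Bs : set (set Y))
  (HI : forall a b, Bs a -> Bs b -> Bs (a `&` b))
  (HU : forall a b, Bs a -> Bs b -> Bs (a `|` b))
  (HM : forall b, Bs b -> exists u v : nat -> set Y,
  (forall n, Bs (u n)) /\ (forall n, Bs (v n)) /\ b = \bigcup_n u n /\
  (forall n, u n `&` v n = set0) /\ (forall n, v n `|` b = setT)) :
  completely_regular (gen_topology Bs).
Proof.
move=> F p hF nFp.
case: (gen_basic HI hF) => [eT|hloc].
  exists (fun _ => 0%R); split; [|split; [|split]].
  - move=> A _.
    have [A0|nA0] := pselect (A 0%R).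
      have -> : (fun _ : Y => 0%R) @^-1` A = setT by apply/seteqP; split.
      exact: gen_setT.
    have -> : (fun _ : Y => 0%R) @^-1` A = \bigcup_(S in set0) S.
      by apply/seteqP; split => // x [].
    by case: (gen_top Bs) => _ [_]; apply.
  - by move=> y; lra.
  - by [].
  - move=> y Fy; exfalso; have : (~` F) y by rewrite eT.
    by apply.
have [b [Bb [bp bF]]] := hloc p nFp.
have [u [v [Bu [Bv [eb [uv vb]]]]]] := HM b Bb.
have : b p by [].
rewrite {1}eb => -[m _ ump].
have LB : Lc Bs b by exists (fun _ => b); split => //; apply/seteqP; split => x; [move=> h; exists 0%N|case].
have LC : Lc Bs (v m) by exists (fun _ => v m); split => //; apply/seteqP; split => x; [move=> h; exists 0%N|case].
have BC : b `|` v m = setT by rewrite setUC.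
have [h [hc [hb [h0 h1]]]] := urysohn HI HU HM LB LC BC.
exists h; split => //; split => //; split.
  apply: h0 => vp; have := uv m; move/seteqP => [+ _]; by move=> /(_ p (conj ump vp)).
by move=> y Fy; apply: h1 => bny; exact: (bF y bny Fy).
Qed.

Section Quot.
Variables (X : topologicalType) (P : set (set X)).
Hypothesis ringP : ring_of_open_sets P.

Lemma qeq x y : qmap P x = qmap P y -> forall V, P V -> (V x <-> V y).
Proof.
move=> /(congr1 (@proj1_sig _ _)) /= e V PV.
have : cls P y y by move=> W _.
by rewrite -e => /(_ V PV).
Qed.

Lemma qsurj z : exists x, qmap P x = z.
Proof.
case: z => A hA; case: (hA) => x ex; exists x; subst A; rewrite /qmap.
congr (exist _ _ _); exact: Prop_irrelevance.
Qed.

Lemma qpre V : P V -> qmap P @^-1` (qmap P @` V) = V.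
Proof.
move=> PV; apply/seteqP; split => x /=; last by exists x.
by case=> x' Vx' e; have [+ _] := qeq e PV; apply.
Qed.

Lemma qimI U V : P U -> P V -> qmap P @` U `&` qmap P @` V = qmap P @` (U `&` V).
Proof.
move=> PU PV; apply/seteqP; split => z.
  case=> -[x Ux <-] [y Vy e]; exists x => //; split => //.
  by have [+ _] := qeq e PV; apply.
by case=> x [Ux Vx] <-; split; exists x.
Qed.

Definition QB := [set qmap P @` V | V in P].

Lemma QB_I a b : QB a -> QB b -> QB (a `&` b).
Proof.
case=> U PU <- [V PV <-]; rewrite qimI //; exists (U `&` V) => //.
by case: ringP => _ [_]; apply.
Qed.

Lemma QB_U a b : QB a -> QB b -> QB (a `|` b).
Proof.
case=> U PU <- [V PV <-]; exists (U `|` V); first by case: ringP => _ [+ _]; apply.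
apply/seteqP; split => z.
  by case=> x [Ux|Vx] <-; [left|right]; exists x.
by case=> -[x hx <-]; exists x => //; [left|right].
Qed.

Hypothesis seqP : P `<=` Pseq P.

Lemma QB_M b : QB b -> exists u v : nat -> set (quot P),
  (forall n, QB (u n)) /\ (forall n, QB (v n)) /\ b = \bigcup_n u n /\
  (forall n, u n `&` v n = set0) /\ (forall n, v n `|` b = setT).
Proof.
case=> W PW <-.
have [U [V [PU [PV [UV eW]]]]] := seqP PW.
exists (fun n => qmap P @` U n), (fun n => qmap P @` V n); split; [|split; [|split; [|split]]].
- by move=> n; exists (U n).
- by move=> n; exists (V n).
- apply/seteqP; split => z.
    by case=> x; rewrite -eW => -[n _ Ux] <-; exists n => //; exists x.
  by case=> n _ [x Ux <-]; exists x => //; rewrite -eW; exists n.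
- move=> n; rewrite qimI //; apply/seteqP; split => // z [x [Ux Vx] _].
  by have [+ _] := UV n; move=> /(_ x Ux).
- move=> n; apply/seteqP; split => // z _; have [x <-] := qsurj z.
  have [Vx|nVx] := pselect (V n x); first by left; exists x.
  right; exists x => //; rewrite -eW; exists n.+1 => //.
  by have [_ +] := UV n; apply.
Qed.

Lemma QP_cr : completely_regular (QP_topology P).
Proof. exact: (cr_abstract QB_I QB_U QB_M). Qed.

Lemma q_cont W : QP_topology P W -> open (qmap P @^-1` W).
Proof.
move=> hW; apply: (hW (fun W => open (qmap P @^-1` W))).
- split; [|split].
  + by rewrite preimage_setT; exact: openT.
  + by move=> A B oA oB; rewrite preimage_setI; exact: openI.
  + by move=> F hF; rewrite preimage_bigcup; apply: bigcup_open.
- by move=> _ [V PV <-]; rewrite qpre //; case: ringP => + _; apply.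
Qed.

End Quot.

Section Game.
Variables (X : topologicalType) (sigma : seq (set X) -> set X) (hf : set X -> set X).

Fixpoint Bl n : seq (set X) :=
  match n with 0 => [:: hf (sigma [::])] | n'.+1 => rcons (Bl n') (hf (sigma (Bl n'))) end.
Definition Bn n := nth set0 (Bl n) n.
Definition An n := match n with 0 => sigma [::] | n'.+1 => sigma [seq Bn i | i <- iota 0 n'.+1] end.

Lemma size_Bl n : size (Bl n) = n.+1.
Proof. by elim: n => //= n IH; rewrite size_rcons IH. Qed.

Lemma Bl_map n : Bl n = [seq Bn i | i <- iota 0 n.+1].
Proof.
elim: n => // n IH.
have -> : iota 0 n.+2 = iota 0 n.+1 ++ [:: n.+1] by rewrite -addn1 iotaD.
rewrite map_cat -IH /= cats1; congr rcons.
by rewrite /Bn /= nth_rcons size_Bl ltnn eqxx.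
Qed.

Lemma Bn_hf n : Bn n = hf (An n).
Proof.
case: n => // n; rewrite /Bn /= nth_rcons size_Bl ltnn eqxx /=.
by rewrite [in LHS]Bl_map.
Qed.
End Game.

Theorem theorem7 (X : topologicalType) (P : set (set X)) :
  ring_of_open_sets P ->
  (exists sigma, winning_strategyI sigma /\ closed_under P sigma) ->
  P `<=` Pseq P ->
  completely_regular (QP_topology P) /\ skeletal (QP_topology P) (qmap P).
Proof.
move=> ringP [sigma [[stratI winI] [cl0 clS]]] seqP.
split; first exact: QP_cr.
split; first exact: q_cont.
split; first exact: qsurj.
move=> U oU [u Uu].
apply: NNPP => hint.
have hstep : forall V, P V -> V !=set0 -> exists V', P V' /\ V' !=set0 /\ V' `<=` V /\ V' `&` U = set0.
  move=> V PV [v Vv].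
  have nsub : ~ (qmap P @` V `<=` closure_in (QP_topology P) (qmap P @` U)).
    move=> hsub; apply: hint; exists (qmap P v); exists (qmap P @` V); last by exists v.
    by split => //; apply: gen_sub; exists V.
  have [z [[x Vx <-] nclz]] : exists z, (qmap P @` V) z /\ ~ closure_in (QP_topology P) (qmap P @` U) z.
    apply: NNPP => hn; apply: nsub => z hz; apply: NNPP => hc; apply: hn; by exists z.
  have [W [oW [Wz nW]]] : exists W, QP_topology P W /\ W (qmap P x) /\ ~ (W `&` qmap P @` U !=set0).
    apply: NNPP => hn; apply: nclz => W oW Wz; apply: NNPP => hW; apply: hn; by exists W.
  case: (gen_basic (@QB_I X P ringP) oW) => [WT|hb].
    by exfalso; apply: nW; rewrite WT setTI; exists (qmap P u), u.
  have [_ [[V'' PV'' <-] [bz bW]]] := hb _ Wz.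
  exists (V `&` V''); split; first by case: ringP => _ [_]; apply.
  split.
    have : (qmap P @` V `&` qmap P @` V'') (qmap P x) by split => //; exists x.
    by rewrite qimI // => -[x' hx' _]; exists x'.
  split; first by move=> y [].
  apply/seteqP; split => // y [[_ V''y] Uy]; exfalso; apply: nW; exists (qmap P y); split.
    by apply: bW; exists y.
  by exists y.
have : forall V, exists V', P V -> V !=set0 -> P V' /\ V' !=set0 /\ V' `<=` V /\ V' `&` U = set0.
  move=> V; have [PV|nPV] := pselect (P V); last by exists V.
  have [ne|nne] := pselect (V !=set0); last by exists V.
  by have [V' hV'] := hstep V PV ne; exists V'.
move=> /choice [hf Hhf].
have good : forall n i, (i <= n)%N -> P (An sigma hf i) /\ An sigma hf i !=set0.
  have PB : forall i, P (An sigma hf i) -> An sigma hf i !=set0 ->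
      P (Bn sigma hf i) /\ Bn sigma hf i !=set0 /\ open (Bn sigma hf i).
    move=> i h1 h2; rewrite Bn_hf; have [? [? _]] := Hhf _ h1 h2; split => //; split => //.
    by case: ringP => + _; apply.
  elim => [|n IH] i.
    rewrite leqn0 => /eqP ->; split => //.
    by case: (stratI [::]) => // B; rewrite in_nil.
  rewrite leq_eqVlt => /orP [/eqP ->|]; last by rewrite ltnS; apply: IH.
  have mem : forall B, B \in [seq Bn sigma hf i | i <- iota 0 n.+1] ->
      P B /\ B !=set0 /\ open B.
    move=> B /mapP [j]; rewrite mem_iota add0n => /andP [_ hj] ->.
    by have [h1 h2] := IH j (hj : (j <= n)%N); apply: PB.
  split.
    apply: clS => // B /mem [? [? _]]; by split.
  case: (stratI [seq Bn sigma hf i | i <- iota 0 n.+1]) => //.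
  by move=> B /mem [_ [? ?]]; split.
have play : play_by sigma (An sigma hf) (Bn sigma hf).
  split => //; split => // n.
  have [h1 h2] := good n n (leqnn n).
  rewrite Bn_hf; have [PB [neB [sub _]]] := Hhf _ h1 h2; split => //.
  by split => //; case: ringP => + _; apply.
have := winI _ _ play U (ex_intro _ u Uu) oU.
case=> y [Uy [n _ By]].
have [h1 h2] := good n n (leqnn n).
move: By; rewrite Bn_hf; have [_ [_ [_ disj]]] := Hhf _ h1 h2 => By.
by move/seteqP: disj => [/(_ y (conj By Uy))].
Qed.
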